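(* For every fixed integer $d\geq 2$ there exist constants $c_1,c_2>0$ (depending only on $d$) such that for all integers $n_1\geq n_2\geq\dots\geq n_d\geq 1$ with $n_1\geq 2$, $$c_1\prod_{j=2}^d n_j\leq \operatorname{tw}(P_{n_1}\square\cdots\square P_{n_d})\leq \operatorname{tw}(P_{n_1}\boxtimes\cdots\boxtimes P_{n_d})\leq c_2\prod_{j=2}^d n_j.$$
   Context: $P_n$ denotes the path on $n$ vertices and $\operatorname{tw}$ denotes treewidth. The cartesian product $G \square H$ has vertex set $V(G)\times V(H)$, with $(a,v)(b,u)$ an edge iff either $ab\in E(G)$ and $u=v$, or $uv\in E(H)$ and $a=b$. The strong product $G\boxtimes H$ has the same vertex set, with distinct vertices $(a,v),(b,u)$ adjacent iff ($a=b$ or $ab\in E(G)$) and ($u=v$ or $uv\in E(H)$). *)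

(* Defs.v *)
From mathcomp Require Import all_boot.
From Stdlib Require Import ClassicalEpsilon.
Set Implicit Arguments.
Unset Strict Implicit.
Unset Printing Implicit Defensive.

(* A tree on a finite node type I: symmetric, irreflexive, connected,
   with exactly #|I| - 1 (unordered) edges, i.e. 2 (#|I| - 1) ordered pairs. *)
Definition is_tree (I : finType) (e : rel I) : Prop :=
  [/\ symmetric e, irreflexive e,
      (forall x y : I, connect e x y) &
      #|[set p : I * I | e p.1 p.2]| = 2 * (#|I| - 1)].

Definition is_tree_decomposition (V : finType) (adj : rel V)
    (I : finType) (e : rel I) (B : I -> {set V}) : Prop :=
  [/\ is_tree e,
      (forall v : V, exists i : I, v \in B i),
      (forall u v : V, adj u v -> exists i : I, (u \in B i) && (v \in B i)) &
      (forall v : V, forall i j : I, v \in B i -> v \in B j ->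
         connect [rel x y | [&& e x y, v \in B x & v \in B y]] i j)].

Definition has_td_width (V : finType) (adj : rel V) (k : nat) : Prop :=
  exists (I : finType) (e : rel I) (B : I -> {set V}),
    is_tree_decomposition adj e B /\ forall i : I, #|B i| <= k.+1.

Lemma has_td_width_exists (V : finType) (adj : rel V) :
  exists k, (fun k => if excluded_middle_informative (has_td_width adj k)
                      then true else false) k.
Proof.
exists #|V|.
case: excluded_middle_informative => // [[]].
exists unit, (fun _ _ => false), (fun _ => [set: V]); split; last first.
  by move=> _; rewrite cardsT.
split.
- split => //; first by move=> [] [].
  rewrite card_unit /=.
  apply/eqP; rewrite cards_eq0; apply/eqP/setP => p; by rewrite !inE.
- by move=> v; exists tt; rewrite inE.
- by move=> u v _; exists tt; rewrite !inE.
- by move=> v [] [] _ _; exact: connect0.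
Qed.

Definition treewidth (V : finType) (adj : rel V) : nat :=
  ex_minn (has_td_width_exists adj).

Definition grid_vertex (d : nat) (n : 'I_d -> nat) : finType :=
  {dffun forall i : 'I_d, 'I_(n i)}.

Definition path_adj (a b : nat) : bool := (a == b.+1) || (b == a.+1).

Definition cart_adj (d : nat) (n : 'I_d -> nat) : rel (grid_vertex n) :=
  fun x y => [exists i : 'I_d, path_adj (x i) (y i) &&
                [forall j : 'I_d, (j != i) ==> ((x j : nat) == y j)]].

Definition strong_adj (d : nat) (n : 'I_d -> nat) : rel (grid_vertex n) :=
  fun x y => (x != y) &&
    [forall i : 'I_d, ((x i : nat) == y i) || path_adj (x i) (y i)].

Arguments cart_adj {d} n.
Arguments strong_adj {d} n.

(* Main.v *)
Require Import Defs.
From mathcomp Require Import all_boot.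
From Stdlib Require Import Reals.
From mathcomp Require Import zify.
From Stdlib Require Import ClassicalEpsilon Lra.
Set Implicit Arguments.
Unset Strict Implicit.
Unset Printing Implicit Defensive.
Section TreeHelly.
Variable I : finType.
Variable e : rel I.
Hypothesis esym : symmetric e.
Hypothesis eirr : irreflexive e.

Definition eU (U : {set I}) : rel I := fun x y => [&& e x y, x \in U & y \in U].
Definition connU (U : {set I}) := forall x y, x \in U -> y \in U -> connect (eU U) x y.
Definition nedges (U : {set I}) := #|[set p : I * I | eU U p.1 p.2]|.

Lemma card_pairs (T : finType) (A : {set T * T}) :
  #|A| = \sum_(x : T) #|[set y | (x, y) \in A]|.
Proof.
rewrite -sum1_card.
rewrite (eq_bigr (fun x => \sum_(y | (x, y) \in A) 1)); last first.
  by move=> x _; rewrite -sum1_card; apply: eq_bigl => y; rewrite inE.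
rewrite pair_big_dep /=; apply: eq_bigl => -[x y] //.
Qed.

Lemma eU_mono (A B : {set I}) : A \subset B -> subrel (connect (eU A)) (connect (eU B)).
Proof.
move=> AB; apply: connect_sub => x y /and3P[exy xA yA]; apply: connect1.
by rewrite /eU exy (subsetP AB _ xA) (subsetP AB _ yA).
Qed.

Lemma avoid_leaf (A : {set I}) l p x y : (forall q, q \in A -> e l q -> q = p) ->
  x != l -> y != l -> connect (eU A) x y -> connect (eU (A :\ l)) x y.
Proof.
move=> Hl Hx Hy /connectP [s Hp Ey]; subst y; move: Hy.
case: (shortenP Hp) => {Hp} s Hp Hu _ Hy.
have Hls : l \notin s.
  apply/negP => /splitPr Hs; move: Hs Hp Hu Hy => [s1 s2].
  rewrite cat_path last_cat /= => /andP[_ /andP[/and3P[ea aA lA] Hp2]].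
  case: s2 Hp2 => [|b s3] /=; first by rewrite eqxx.
  move=> /andP[/and3P[elb _ bA] _] Hu _.
  have Ea : last x s1 = p by apply: Hl => //; rewrite esym.
  have Eb : b = p by apply: Hl.
  case/andP: Hu => xn; rewrite cat_uniq => /and3P[_ H _].
  have := mem_last x s1; rewrite inE Ea -Eb => /orP [/eqP bx | bs1].
    by move: xn; rewrite -bx mem_cat !inE eqxx !orbT.
  by case/negP: H; apply/hasP; exists b => //; rewrite !inE eqxx orbT.
apply/connectP; exists s => //.
elim: s x Hx Hp Hls {Hu Hy} => //= z s IH x Hx /andP[/and3P[exz xA zA] Hp].
rewrite inE negb_or => /andP[zl Hls]; rewrite eq_sym in zl.
apply/andP; split; first by rewrite /eU !inE exz Hx zl xA zA.
exact: IH.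
Qed.

Lemma leaf_nb (U A : {set I}) l p z : A \subset U -> connU A ->
  (forall q, q \in U -> e l q -> q = p) -> l \in A -> z \in A -> z != l -> p \in A.
Proof.
move=> AU cA Hl lA zA zl.
have /connectP [[|q s] /= Hp Ez] := cA l z lA zA; first by rewrite Ez eqxx in zl.
case/andP: Hp => /and3P[elq _ qA] _.
by rewrite -(Hl q (subsetP AU _ qA) elq).
Qed.

Lemma leaf_exists U : connU U -> nedges U = 2 * (#|U| - 1) -> 1 < #|U| ->
  exists l p, [/\ l \in U, p \in U, e l p & forall q, q \in U -> e l q -> q = p].
Proof.
move=> cU nU U2.
have [/existsP [l /andP [lU degl]] | H] :=
  boolP [exists l, (l \in U) && (#|[set y in U | e l y]| <= 1)]; last first.
  exfalso; move: nU; rewrite /nedges card_pairs.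
  have : \sum_(x in U) 2 <= \sum_(x : I) #|[set y | (x, y) \in [set p : I * I | eU U p.1 p.2]]|.
    rewrite [X in _ <= X](bigID (fun x => x \in U)) /= -[X in X <= _]addn0.
    apply: leq_add => //; apply: leq_sum => x xU.
    move/existsPn: H => /(_ x); rewrite xU /= -ltnNge => /leq_trans; apply.
    apply: subset_leq_card; apply/subsetP => y; rewrite !inE /eU /= xU.
    by case/andP=> -> ->.
  rewrite sum_nat_const => + E; rewrite E; lia.
have [y yU yl] : exists2 y, y \in U & y != l.
  apply/exists_inP; apply: contraLR U2 => /exists_inPn H; rewrite -leqNgt.
  apply/card_le1_eqP => a b aU bU.
  by move: (H a aU) (H b bU); rewrite !negbK => /eqP -> /eqP ->.
have /connectP [[|q s] /= Hp Ey] := cU l y lU yU; first by rewrite Ey eqxx in yl.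
case/andP: Hp => /and3P[elq _ qU] _.
exists l, q; split => // q' q'U elq'.
move/card_le1_eqP: degl => /(_ q' q); rewrite !inE q'U qU elq elq'.
by move=> /(_ isT isT).
Qed.

Lemma tree_remove_leaf U l p : connU U -> nedges U = 2 * (#|U| - 1) ->
  l \in U -> p \in U -> e l p -> (forall q, q \in U -> e l q -> q = p) ->
  connU (U :\ l) /\ nedges (U :\ l) = 2 * (#|U :\ l| - 1).
Proof.
move=> cU nU lU pU elp Hl.
have pl : p != l by apply/eqP => Epl; move: elp; rewrite Epl eirr.
split.
  move=> x y; rewrite !inE => /andP[xl xU] /andP[yl yU].
  exact: (avoid_leaf Hl xl yl (cU x y xU yU)).
have E : [set pr : I * I | eU U pr.1 pr.2] =
         [set pr : I * I | eU (U :\ l) pr.1 pr.2] :|: [set (l, p); (p, l)].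
  apply/setP => -[a b]; rewrite !inE /eU /= !inE !xpair_eqE.
  have [-> | al] := eqVneq a l.
    rewrite lU (eq_sym l p) (negbTE pl) /= ?andbT ?andbF ?orbF /=.
    apply/idP/idP => [/andP[elb bU]|/eqP ->]; first by rewrite (Hl b bU elb).
    by rewrite elp pU.
  have [-> | bl] := eqVneq b l.
    rewrite lU /= ?andbT ?andbF ?orbF /=.
    apply/idP/idP => [/andP [eal aU] | /eqP ->]; last by rewrite esym elp pU.
    by rewrite (Hl a aU) // esym.
  by rewrite /= ?andbT ?andbF ?orbF.
have D : [disjoint [set pr : I * I | eU (U :\ l) pr.1 pr.2] & [set (l, p); (p, l)]].
  rewrite -setI_eq0; apply/eqP/setP => -[a b]; rewrite !inE /eU /= !inE !xpair_eqE.
  by case: (a =P l) => [->|_]; case: (b =P l) => [->|_] /=; rewrite ?andbF ?andbT ?orbF //= ?eqxx ?andbF.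
move: D nU; rewrite -setI_eq0 /nedges E cardsU => /eqP ->; rewrite cards0 subn0 cards2.
have -> : (l, p) != (p, l) by apply: contraNneq pl => [[->]].
rewrite (cardsD1 l U) lU; lia.
Qed.

End TreeHelly.
Section Helly.
Variable I : finType.
Variable e : rel I.
Hypothesis esym : symmetric e.
Hypothesis eirr : irreflexive e.

Lemma helly (J : finType) (P : pred J) : forall (U : {set I}) (S : J -> {set I}),
  connU e U -> nedges e U = 2 * (#|U| - 1) -> U != set0 ->
  (forall j, P j -> S j \subset U) ->
  (forall j, P j -> S j != set0) ->
  (forall j, P j -> connU e (S j)) ->
  (forall j j', P j -> P j' -> S j :&: S j' != set0) ->
  exists2 c, c \in U & forall j, P j -> c \in S j.
Proof.
move=> U; have [m Hm] : exists m, #|U| <= m by exists #|U|.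
elim: m U Hm => [|m IH] U Hm S cU nU U0 SU S0 cS SS.
  by move: U0; rewrite -card_gt0; case: #|U| Hm.
case/set0Pn: U0 => c0 c0U.
have [U1 | U2] := leqP #|U| 1.
  exists c0 => // j Pj; case/set0Pn: (S0 j Pj) => z zS.
  have zU := subsetP (SU j Pj) _ zS.
  by move/card_le1_eqP: U1 => /(_ z c0 zU c0U) E; rewrite E.
have [l [p [lU pU elp Hl]]] := leaf_exists cU nU U2.
have pl : p != l by apply/eqP => Epl; move: elp; rewrite Epl eirr.
have [cU' nU'] := tree_remove_leaf esym eirr cU nU lU pU elp Hl.
pose S' j := (S j :\ l) :|: (if l \in S j then [set p] else set0).
have pS j : P j -> l \in S j -> (exists2 z, z \in S j & z != l) -> p \in S j.
  by move=> Pj lS [z zS zl]; exact: (leaf_nb (SU j Pj) (cS j Pj) Hl lS zS zl).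
have [c cU'' cS'] : exists2 c, c \in U :\ l & forall j, P j -> c \in S' j.
  apply: (IH (U :\ l)) => //.
  - by move: Hm; rewrite (cardsD1 l U) lU.
  - by apply/set0Pn; exists p; rewrite !inE pl.
  - move=> j Pj; apply/subsetP => z; rewrite /S' !inE.
    case/orP => [/andP [-> zS] | ]; first by rewrite (subsetP (SU j Pj) _ zS).
    by case: (l \in S j); rewrite !inE // => /eqP ->; rewrite pl.
  - move=> j Pj; apply/set0Pn; rewrite /S'.
    case lS: (l \in S j); first by exists p; rewrite !inE eqxx orbT.
    case/set0Pn: (S0 j Pj) => z zS; exists z; rewrite !inE zS andbT ?orbF.
    by apply/eqP => zl; move: lS; rewrite -zl zS.
  - move=> j Pj x y xS yS.
    have sub1 : S j :\ l \subset S' j by apply/subsetP => z zS; rewrite /S' inE zS.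
    case lS: (l \in S j); last first.
      have E : S' j = S j.
        apply/setP => z; rewrite /S' lS !inE orbF.
        by case: eqVneq => [->|] //=; rewrite lS.
      by rewrite E in xS yS *; exact: cS.
    case: (boolP [exists z in S j, z != l]) => [/exists_inP [z zS zl] | /exists_inPn H].
      have pSj := pS j Pj lS (ex_intro2 _ _ z zS zl).
      have sub2 : S' j \subset S j :\ l.
        apply/subsetP => w; rewrite /S' lS !inE => /orP [//| /eqP ->].
        by rewrite pl pSj.
      have xS' := subsetP sub2 _ xS; have yS' := subsetP sub2 _ yS.
      move: xS' yS'; rewrite !inE => /andP [xl xSj] /andP [yl ySj].
      apply: (eU_mono sub1).
      apply: (avoid_leaf esym (p := p)) => //; last exact: cS.
      by move=> q qS; apply: Hl; exact: (subsetP (SU j Pj) _ qS).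
    have Ex : forall w, w \in S' j -> w = p.
      move=> w; rewrite /S' lS !inE => /orP [/andP [wl wS] | /eqP //].
      by move: (H w wS); rewrite wl.
    by rewrite (Ex x xS) (Ex y yS); exact: connect0.
  - move=> j j' Pj Pj'; case/set0Pn: (SS j j' Pj Pj') => z.
    rewrite inE => /andP[zj zj']; apply/set0Pn.
    case: (eqVneq z l) => [Ez | zl].
      subst z; exists p; rewrite /S' inE zj zj' !inE eqxx !orbT.
      by [].
    by exists z; rewrite /S' !inE zl zj zj'.
case: (boolP [exists j, P j && (S j \subset [set l])]) => [/existsP [j0 /andP [Pj0 Sj0]] | /existsPn H].
  exists l => // j Pj; case/set0Pn: (SS j j0 Pj Pj0) => z; rewrite inE => /andP [zj zj0].
  by move: (subsetP Sj0 _ zj0); rewrite inE => /eqP <-.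
exists c; first by move: cU''; rewrite inE => /andP[].
move=> j Pj; move: (cS' j Pj); rewrite /S' !inE.
case lS: (l \in S j); rewrite ?inE ?orbF; last by case/andP.
case/orP => [/andP[_ ->] // | /eqP ->].
apply: pS => //; move: (H j); rewrite Pj /= => /subsetPn [z zS].
by rewrite inE => zl; exists z.
Qed.
End Helly.
Lemma tw_spec (V : finType) (adj : rel V) : has_td_width adj (treewidth adj).
Proof.
rewrite /treewidth; case: ex_minnP => m + _.
by case: excluded_middle_informative.
Qed.

Lemma tw_min (V : finType) (adj : rel V) k : has_td_width adj k -> treewidth adj <= k.
Proof.
move=> H; rewrite /treewidth; case: ex_minnP => m _; apply.
by case: excluded_middle_informative.
Qed.

Section TD.
Variables (V : finType) (adj : rel V) (I : finType) (e : rel I) (B : I -> {set V}).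
Hypothesis hTD : is_tree_decomposition adj e B.

Definition TM (M : {set V}) := [set i | [exists v in M, v \in B i]].

Lemma td_sym : symmetric e. Proof. by case: hTD => -[]. Qed.
Lemma td_irr : irreflexive e. Proof. by case: hTD => -[]. Qed.

Lemma td_connU : connU e setT.
Proof.
case: hTD => -[_ _ c _] _ _ _ x y _ _.
rewrite (@eq_connect _ _ e) ?c // => a b; by rewrite /eU !inE !andbT.
Qed.

Lemma td_nedges : nedges e setT = 2 * (#|[set: I]| - 1).
Proof.
case: hTD => -[_ _ _ n] _ _ _; rewrite cardsT -n /nedges.
by apply: eq_card => -[a b]; rewrite !inE /eU /= !inE !andbT.
Qed.

Lemma bagconn (M : {set V}) v i j : v \in M -> v \in B i -> v \in B j ->
  connect (eU e (TM M)) i j.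
Proof.
case: hTD => _ _ _ H vM vi vj.
apply: connect_sub (H v i j vi vj) => a b /= /and3P [eab va vb].
apply: connect1; rewrite /eU eab !inE /=.
by apply/andP; split; apply/exists_inP; exists v.
Qed.

Lemma subtree_conn (R : rel V) u : subrel R adj ->
  connU e (TM [set v | connect R u v]).
Proof.
move=> Rs; set M := [set v | connect R u v].
case: hTD => _ cov ecov _.
have [i0 ui0] := cov u.
have uM : u \in M by rewrite inE connect0.
have key : forall v, v \in M -> forall i, v \in B i -> connect (eU e (TM M)) i0 i.
  move=> v; rewrite inE => /connectP [s Hs ->]; move: Hs.
  elim/last_ind: s => [|s w IH] /=; first by move=> _ i ui; exact: bagconn uM ui0 ui.
  rewrite rcons_path last_rcons => /andP [Hs Rw] i wi.
  have /ecov [k /andP [ak wk]] := Rs _ _ Rw.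
  apply: connect_trans (IH Hs k ak) _.
  apply: (bagconn (v := w)) => //; rewrite inE.
  by apply/connectP; exists (rcons s w); rewrite ?rcons_path ?Hs ?Rw ?last_rcons.
move=> x y; rewrite !inE => /exists_inP [a aM ax] /exists_inP [b bM bx].
apply: connect_trans (key b bM y bx).
rewrite sym_connect_sym ?(key a aM x ax) // => p q.
by rewrite /eU td_sym; case: (e q p); case: (p \in TM M); case: (q \in TM M).
Qed.

Definition avoidR (c : I) : rel V :=
  fun a b => [&& adj a b, a \notin B c & b \notin B c].
Definition comp (c : I) (u : V) := [set v | connect (avoidR c) u v].

Lemma comp_avoid c u v : u \notin B c -> v \in comp c u -> v \notin B c.
Proof.
move=> uB; rewrite inE => /connectP [s Hs ->]; move: Hs.
case/lastP: s => [|s w] //=; rewrite rcons_path last_rcons.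
by case/andP => _ /and3P [].
Qed.

Lemma balanced_bag (v0 : V) : exists c : I, forall u, u \notin B c ->
  2 * #|comp c u| <= #|V|.
Proof.
pose P (j : I * V) := (j.2 \notin B j.1) && (#|V| < 2 * #|comp j.1 j.2|).
pose S (j : I * V) := TM (comp j.1 j.2).
case: hTD => _ cov _ _.
have [c _ Hc] : exists2 c, c \in [set: I] & forall j, P j -> c \in S j.
  apply: (@helly _ _ td_sym td_irr _ P setT S) => //.
  - exact: td_connU.
  - exact: td_nedges.
  - by apply/set0Pn; have [i _] := cov v0; exists i; rewrite inE.
  - move=> [i u] _; apply/set0Pn; have [k uk] := cov u; exists k.
    by rewrite inE; apply/exists_inP; exists u; rewrite // inE connect0.
  - move=> [i u] _; apply: subtree_conn => a b /and3P [].
    by [].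
  - move=> [i u] [i' u'] /andP [_ H1] /andP [_ H2]; apply/set0Pn.
    have : 0 < #|comp i u :&: comp i' u'|.
      have := cardsUI (comp i u) (comp i' u'); have := subset_leq_card (subsetT (comp i u :|: comp i' u')); rewrite cardsT.
      rewrite /= -cardsT in H1 H2; rewrite -cardsT; lia.
    case/card_gt0P => z; rewrite inE => /andP [z1 z2].
    have [k zk] := cov z; exists k; rewrite !inE.
    by apply/andP; split; apply/exists_inP; exists z.
exists c => u uB; rewrite leqNgt; apply/negP => Hb.
have /Hc : P (c, u) by rewrite /P uB Hb.
rewrite inE => /exists_inP [v vM vc].
by move: (comp_avoid uB vM); rewrite vc.
Qed.

End TD.
Lemma card_bigcup_le (J T : finType) (P : pred J) (F : J -> {set T}) :
  #|\bigcup_(j | P j) F j| <= \sum_(j | P j) #|F j|.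
Proof.
elim/big_rec2: _ => [|j y X _ H]; first by rewrite cards0.
by rewrite cardsU (leq_trans (leq_subr _ _)) // leq_add2l.
Qed.

Section Grid.
Variables (d : nat) (n : 'I_d -> nat).
Notation V := (grid_vertex n).

Lemma vertex_eq (x y : V) : (forall i, (x i : nat) = y i) -> x = y.
Proof. by move=> H; apply/ffunP => i; apply: val_inj; apply: H. Qed.

Definition upd (x : V) (i : 'I_d) (t : nat) : V :=
  @finfun _ (fun j => 'I_(n j)) (fun j => if j == i then insubd (x j) t else x j).

Lemma updE (x : V) i t j :
  (upd x i t j : nat) = if j == i then (if t < n j then t else x j) else x j.
Proof. by rewrite /upd ffunE; case: (j == i) => //; rewrite val_insubd. Qed.

Lemma cart_sym : symmetric (cart_adj n).
Proof.
move=> x y; rewrite /cart_adj; apply/existsP/existsP => -[i /andP [H1 /forallP H2]];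
  exists i; move: H1; rewrite /path_adj orbC => -> /=; apply/forallP => j;
  by move: (H2 j); case: (j != i) => //= /eqP ->.
Qed.

Definition online (x : V) (i : 'I_d) (y : V) := [forall j : 'I_d, (j != i) ==> ((y j : nat) == x j)].

Lemma seg (R : rel V) (x : V) (i : 'I_d) :
  symmetric R ->
  (forall a b, online x i a -> online x i b -> cart_adj n a b -> R a b) ->
  forall y, online x i y -> connect R x y.
Proof.
move=> Rsym HR.
have n0 : 0 < n i by apply: leq_ltn_trans (ltn_ord (x i)).
pose z := upd x i 0.
have onl_upd : forall y t, online x i y -> online x i (upd y i t).
  move=> y t /forallP H; apply/forallP => j; apply/implyP => ji.
  by rewrite updE (negbTE ji); apply: (implyP (H j)).
have zl : online x i z by apply: onl_upd; apply/forallP => j; apply/implyP.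
have key : forall t y, online x i y -> (y i : nat) = t -> connect R z y.
  elim => [|t IH] y yl yi.
    suff -> : y = z by exact: connect0.
    apply: vertex_eq => j; rewrite updE; case: eqP => [->|/eqP ji]; first by rewrite n0 yi.
    by apply/eqP; apply: (implyP (forallP yl j)).
  have tn : t < n i by have := ltn_ord (y i); rewrite yi => /ltnW.
  pose y' := upd y i t.
  have y'l : online x i y' := onl_upd y t yl.
  apply: connect_trans (IH y' y'l _) (connect1 _); first by rewrite updE eqxx tn.
  apply: HR => //; apply/existsP; exists i; apply/andP; split.
    by rewrite /path_adj updE eqxx tn yi eqxx orbT.
  by apply/forallP => j; apply/implyP => ji; rewrite updE (negbTE ji).
have sR : connect_sym R by apply: sym_connect_sym.
move=> y yl.
have xl : online x i x by apply/forallP => j; apply/implyP.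
by apply: connect_trans (key _ y yl erefl); rewrite sR; apply: (key _ x xl erefl).
Qed.

Definition stage (u v w : V) (i : 'I_d) :=
  [forall j : 'I_d, ((j < i) ==> ((w j : nat) == v j)) && ((i < j) ==> ((w j : nat) == u j))].
Definition on_route (u v w : V) := [exists i, stage u v w i].

Definition mid (u v : V) (k : nat) : V :=
  @finfun _ (fun j => 'I_(n j)) (fun j => if j < k then v j else u j).

Lemma route_conn (R : rel V) (u v : V) :
  symmetric R ->
  (forall a b, on_route u v a -> on_route u v b -> cart_adj n a b -> R a b) ->
  connect R u v.
Proof.
move=> Rsym HR.
have : forall k, k <= d -> connect R u (mid u v k).
  elim => [|k IH] kd.
    suff -> : mid u v 0 = u by exact: connect0.
    by apply/ffunP => j; rewrite ffunE.
  apply: connect_trans (IH (ltnW kd)) _.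
  pose i := Ordinal kd.
  have onl : forall y, online (mid u v k) i y -> on_route u v y.
    move=> y /forallP yl; apply/existsP; exists i; apply/forallP => j.
    have := implyP (yl j); rewrite ffunE -val_eqE /=.
    case: (ltngtP j k) => [jk|kj|jk] //=.
    - by move=> /(_ isT) /eqP ->; rewrite eqxx.
    - by move=> /(_ isT) /eqP ->; rewrite eqxx.
  apply: (seg (i := i)) Rsym _ _ _.
    by move=> a b al bl; apply: HR; apply: onl.
  apply/forallP => j; apply/implyP => ji; rewrite !ffunE.
  have : (j : nat) != k by [].
  by rewrite ltnS leq_eqVlt => /negbTE ->.
move=> /(_ d (leqnn d)); congr connect.
by apply/ffunP => j; rewrite ffunE ltn_ord.
Qed.

End Grid.
Section Count.
Variables (d : nat) (n : 'I_d -> nat).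
Notation V := (grid_vertex n).

Lemma card_grid : #|V| = \prod_(i : 'I_d) n i.
Proof.
rewrite card_dep_ffun foldrE big_map big_enum /=; apply: eq_bigr => i _.
exact: card_ord.
Qed.

Lemma stage_card (w : V) (i : 'I_d) :
  #|[set uv : V * V | stage uv.1 uv.2 w i]| <= #|V| * n i.
Proof.
pose f (uv : V * V) : V * 'I_(n i) :=
  (@finfun _ (fun j => 'I_(n j)) (fun j => if j <= i then uv.1 j else uv.2 j), uv.2 i).
have -> : #|V| * n i = #|{: V * 'I_(n i)}| by rewrite card_prod card_ord.
apply: (@leq_card_in _ _ f) => -[u v] [u' v']; rewrite !inE /=.
move=> /forallP H /forallP H' [Ez Ei].
have Ez' (j : 'I_d) : (if j <= i then (u j : nat) else v j) = (if j <= i then (u' j : nat) else v' j).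
  have := congr1 (fun g : V => (g j : nat)) Ez; rewrite /= !ffunE.
  by case: (j <= i).
congr pair; apply: vertex_eq => j.
  case: (leqP j i) => ji; first by have := Ez' j; rewrite ji.
  have /andP [_ h] := H j; have /andP [_ h'] := H' j.
  by move: h h'; rewrite ji /= => /eqP <- /eqP <-.
case: (ltngtP j i) => ji.
- have /andP [h _] := H j; have /andP [h' _] := H' j.
  by move: h h'; rewrite ji /= => /eqP <- /eqP <-.
- by have := Ez' j; rewrite leqNgt ji.
- by rewrite (_ : j = i) ?Ei //; apply: val_inj.
Qed.

Definition badset (Bc : {set V}) :=
  [set uv : V * V | [exists w in Bc, on_route uv.1 uv.2 w]].

Lemma bad_bound (Bc : {set V}) :
  #|badset Bc| <= #|Bc| * (\sum_(i : 'I_d) #|V| * n i).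
Proof.
apply: (@leq_trans #|\bigcup_(w in Bc) \bigcup_(i : 'I_d) [set uv : V * V | stage uv.1 uv.2 w i]|).
  apply: subset_leq_card; apply/subsetP => -[u v]; rewrite inE => /exists_inP [w wB /existsP [i Hi]].
  apply/bigcupP; exists w => //; apply/bigcupP; exists i => //; by rewrite inE.
apply: (leq_trans (card_bigcup_le _ _)).
rewrite -sum_nat_const; apply: leq_sum => w _.
apply: (leq_trans (card_bigcup_le _ _)); apply: leq_sum => i _; exact: stage_card.
Qed.

Lemma good_bound (hd : 0 < d) (Bc : {set V}) :
  (forall u, u \notin Bc ->
     2 * #|[set v | connect (fun a b => [&& cart_adj n a b, a \notin Bc & b \notin Bc]) u v]| <= #|V|) ->
  2 * #|~: badset Bc| <= #|V| * #|V|.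
Proof.
move=> Hbal; set R := (fun a b => _) in Hbal.
have Rsym : symmetric R.
  by move=> a b; rewrite /R cart_sym; case: (a \in Bc); case: (b \in Bc); rewrite /= ?andbF.
have uon : forall u v : V, on_route u v u.
  move=> u v; apply/existsP; exists (Ordinal hd); apply/forallP => j /=.
  by rewrite eqxx implybT.
rewrite card_pairs big_distrr /=.
have -> : #|V| * #|V| = \sum_(u : V) #|V| by rewrite sum_nat_const cardT -cardE.
apply: leq_sum => u _.
have good : forall v, (u, v) \in ~: badset Bc ->
    (u \notin Bc) /\ connect R u v.
  move=> v; rewrite !inE negb_exists => /forallP Hn.
  have nB : forall w, on_route u v w -> w \notin Bc.
    by move=> w Hw; apply/negP => wB; move: (Hn w); rewrite wB Hw.
  split; first exact: nB.
  apply: route_conn Rsym _ => a b ar br ab.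
  by rewrite /R ab !nB.
case uB : (u \in Bc).
  rewrite (_ : [set y | (u, y) \in ~: badset Bc] = set0) ?cards0 //.
  apply/setP => v; rewrite [in RHS]inE; apply/negP; rewrite inE => /good [].
  by rewrite uB.
apply: leq_trans (Hbal u (negbT uB)); rewrite leq_mul2l; apply/orP; right.
apply: subset_leq_card; apply/subsetP => v; rewrite !inE => H.
by have [] := good v; rewrite ?inE.
Qed.

End Count.
Section Bounds.
Variables (d : nat) (n : 'I_d -> nat).
Notation V := (grid_vertex n).

Lemma grid_lb (hd : 0 < d) (x0 : V) (m k : nat) : (forall i, n i <= m) ->
  has_td_width (cart_adj n) k -> #|V| <= 2 * k.+1 * (d * m).
Proof.
move=> Hm [I [e [B [hTD Hk]]]].
have [c Hc] := balanced_bag hTD x0.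
have G : 2 * #|~: badset (B c)| <= #|V| * #|V|.
  by apply: good_bound => // u uB; exact: Hc u uB.
have Bd := bad_bound (B c).
have C := cardsC (badset (B c)); rewrite card_prod in C.
have S : \sum_(i : 'I_d) #|V| * n i <= d * (#|V| * m).
  rewrite -[X in X * _](card_ord d) -sum_nat_const.
  by apply: leq_sum => i _; rewrite leq_mul2l Hm orbT.
have Kc := Hk c.
have N0 : 0 < #|V| by apply/card_gt0P; exists x0.
have : #|V| * #|V| <= #|V| * (2 * k.+1 * (d * m)).
  have H1 : #|badset (B c)| <= k.+1 * (d * (#|V| * m)).
    apply: leq_trans Bd _; apply: leq_mul => //.
  move: H1; set b := #|badset _|; set g := #|~: _| in G C.
  rewrite -C in G *; move=> H1; nia.
by rewrite leq_pmul2l.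
Qed.

Lemma tw_pos (i0 : 'I_d) (x0 : V) (h2 : 2 <= n i0) k :
  has_td_width (cart_adj n) k -> 0 < k.
Proof.
move=> [I [e [B [[_ _ ecov _] Hk]]]].
case: k Hk => // Hk.
pose x := upd x0 i0 0; pose y := upd x0 i0 1.
have xi : (x i0 : nat) = 0 by rewrite updE eqxx ltnW.
have yi : (y i0 : nat) = 1 by rewrite updE eqxx h2.
have : cart_adj n x y.
  apply/existsP; exists i0; rewrite /path_adj xi yi /=.
  by apply/forallP => j; apply/implyP => ji; rewrite !updE (negbTE ji).
case/ecov => i /andP [xB yB].
move/card_le1_eqP: (Hk i) => /(_ x y xB yB) Exy.
by move: yi; rewrite Exy xi.
Qed.

Lemma card_fiber (i0 : 'I_d) (c : nat) :
  #|[set x : V | (x i0 : nat) == c]| <= \prod_(j | j != i0) n j.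
Proof.
pose Fam (j : 'I_d) := [pred y : 'I_(n j) | (j != i0) || ((y : nat) == c)].
have H : #|[set x : V | (x i0 : nat) == c]| <= #|(finfun.family Fam : simpl_pred V)|.
  apply: subset_leq_card; apply/subsetP => x; rewrite inE => xc.
  apply/familyP => j; rewrite /Fam /= inE.
  by case: eqVneq => [->|] //=.
apply: (leq_trans H); rewrite card_family foldrE big_map big_enum /= (bigD1 i0) //=.
rewrite -[X in _ <= X]mul1n; apply: leq_mul.
  apply/card_le1_eqP => a b; rewrite /in_mem /= eqxx /= => /eqP a1 /eqP b1.
  by apply/eqP; rewrite -val_eqE /= a1 b1.
apply: leq_prod => j ji; rewrite /Fam; apply: leq_trans (max_card _) _.
by rewrite card_ord.
Qed.

End Bounds.
Lemma path_edges m : #|[set p : 'I_m * 'I_m | path_adj p.1 p.2]| = 2 * (#|'I_m| - 1).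
Proof.
rewrite card_ord; case: m => [|m].
  apply/eqP; rewrite cards_eq0; apply/eqP/setP => -[[]] //.
pose h (t : 'I_m) : 'I_m.+1 * 'I_m.+1 := (widen_ord (leqnSn m) t, lift ord0 t).
pose h' (t : 'I_m) : 'I_m.+1 * 'I_m.+1 := (lift ord0 t, widen_ord (leqnSn m) t).
have hi : injective h by move=> a b [/val_inj].
have hi' : injective h' by move=> a b [_ /val_inj].
have E : [set p : 'I_m.+1 * 'I_m.+1 | path_adj p.1 p.2] = (h @: setT) :|: (h' @: setT).
  apply/setP => -[a b]; rewrite !inE /path_adj /=; apply/idP/idP.
    case/orP => /eqP E.
      have {}E : (a : nat) = b.+1 := E.
      have bm : b < m by rewrite -ltnS -E ltn_ord.
      apply/orP; right; apply/imsetP; exists (Ordinal bm) => //.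
      by congr pair; apply: ord_inj; rewrite /= ?lift0 ?E.
    have {}E : (b : nat) = a.+1 := E.
    have am : a < m by rewrite -ltnS -E ltn_ord.
    apply/orP; left; apply/imsetP; exists (Ordinal am) => //.
    by congr pair; apply: ord_inj; rewrite /= ?lift0 ?E.
  case/orP => /imsetP [t _ [-> ->]]; rewrite /= ?lift0 /= eqxx ?orbT //.
have D : [disjoint h @: setT & h' @: setT].
  rewrite -setI_eq0; apply/eqP/setP => -[a b]; rewrite !inE.
  apply/negP => /andP [/imsetP [t _ E1] /imsetP [s _ E2]].
  have a1 : (a : nat) = t by move: (congr1 (fun p : 'I_m.+1 * 'I_m.+1 => (p.1 : nat)) E1).
  have b1 : (b : nat) = t.+1.
    by rewrite -lift0; move: (congr1 (fun p : 'I_m.+1 * 'I_m.+1 => (p.2 : nat)) E1).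
  have a2 : (a : nat) = s.+1.
    by rewrite -lift0; move: (congr1 (fun p : 'I_m.+1 * 'I_m.+1 => (p.1 : nat)) E2).
  have b2 : (b : nat) = s by move: (congr1 (fun p : 'I_m.+1 * 'I_m.+1 => (p.2 : nat)) E2).
  lia.
rewrite E; move: D; rewrite -setI_eq0 cardsU => /eqP ->.
by rewrite cards0 subn0 !card_imset // cardsT card_ord subn1 /=; lia.
Qed.
Section UB.
Variables (d : nat) (n : 'I_d -> nat).
Notation V := (grid_vertex n).

Lemma grid_ub (i0 : 'I_d) (h2 : 2 <= n i0) :
  has_td_width (strong_adj n) (2 * \prod_(j | j != i0) n j).
Proof.
set P := \prod_(j | j != i0) n j.
set m := n i0.
pose Bg (t : 'I_m) := [set x : V | ((x i0 : nat) == t) || ((x i0 : nat) == t.+1)].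
have esym : symmetric (fun a b : 'I_m => path_adj a b) by move=> a b; rewrite /path_adj orbC.
exists ('I_m), (fun a b : 'I_m => path_adj a b), Bg.
split; last first.
  move=> t; apply: leq_trans (leqnSn _).
  have -> : Bg t = [set x : V | (x i0 : nat) == t] :|: [set x : V | (x i0 : nat) == t.+1].
    by apply/setP => x; rewrite !inE.
  apply: leq_trans (leq_card_setU _ _).1 _; rewrite mul2n -addnn.
  by apply: leq_add; apply: card_fiber.
split.
- split => //.
  + by move=> a; rewrite /path_adj orbb; apply/negbTE; rewrite ltn_eqF.
  + have m0 : 0 < m by apply: leq_trans h2.
    have from0 : forall t (ht : t < m), connect (fun a b : 'I_m => path_adj a b) (Ordinal m0) (Ordinal ht).
      elim => [|t IH] ht; first by rewrite (_ : Ordinal ht = Ordinal m0) ?connect0 //; apply: ord_inj.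
      apply: connect_trans (IH (ltnW ht)) (connect1 _).
      by rewrite /path_adj /= eqxx orbT.
    have f0 (y : 'I_m) : connect (fun a b : 'I_m => path_adj a b) (Ordinal m0) y.
      have := from0 y (ltn_ord y).
      by rewrite (_ : Ordinal (ltn_ord y) = y) //; apply: ord_inj.
    move=> x y; apply: (connect_trans (_ : connect _ x (Ordinal m0)) (f0 y)).
    by rewrite (sym_connect_sym esym) f0.
  + exact: path_edges.
- by move=> x; exists (x i0); rewrite inE eqxx.
- move=> x y /andP [_ /forallP /(_ i0) H].
  exists (if (x i0 : nat) <= y i0 then x i0 else y i0); rewrite !inE.
  move: H; rewrite /path_adj; case: leqP; rewrite eqxx /= ?andbT;
  move: (nat_of_ord (x i0)) (nat_of_ord (y i0)) => a b; lia.
- move=> v i j; rewrite !inE => vi vj.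
  have [-> | ij] := eqVneq i j; first exact: connect0.
  apply: connect1; rewrite /= !inE vi vj !andbT /path_adj.
  move: ij; rewrite -val_eqE /=; lia.
Qed.

End UB.
Lemma td_sub (V : finType) (adj adj' : rel V) k :
  subrel adj adj' -> has_td_width adj' k -> has_td_width adj k.
Proof.
move=> sub [I [e [B [[t c ec sc] Hk]]]].
exists I, e, B; split => //; split => // u v /sub; exact: ec.
Qed.

Lemma cart_sub_strong d (n : 'I_d -> nat) : subrel (cart_adj n) (strong_adj n).
Proof.
move=> x y /existsP [i /andP [pa /forallP H]].
apply/andP; split.
  apply/eqP => Exy; move: pa; rewrite Exy /path_adj orbb.
  by rewrite ltn_eqF.
apply/forallP => j; case: (eqVneq j i) => [->|ji]; first by rewrite pa orbT.
by move: (implyP (H j) ji) => ->.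
Qed.

Theorem mainTheorem11 (d : nat) (hd : 2 <= d) :
  exists c1 c2 : R, (0 < c1)%R /\ (0 < c2)%R /\
    forall n : 'I_d -> nat,
      (forall i j : 'I_d, i <= j -> n j <= n i) ->
      (forall i : 'I_d, 1 <= n i) ->
      (forall i : 'I_d, nat_of_ord i = 0 -> 2 <= n i) ->
      let P := \prod_(j < d | 0 < nat_of_ord j) n j in
      (c1 * INR P <= INR (treewidth (cart_adj n)))%R /\
      treewidth (cart_adj n) <= treewidth (strong_adj n) /\
      (INR (treewidth (strong_adj n)) <= c2 * INR P)%R.
Proof.
have d0 : 0 < d by apply: ltnW.
have dR : (0 < INR d)%R by apply: lt_0_INR; apply/ltP.
exists (/ (4 * INR d))%R, 2%R; split; first by apply: Rinv_0_lt_compat; lra.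
split; first by lra.
move=> n Hsort Hpos H0 P.
pose i0 : 'I_d := Ordinal d0.
have h2 : 2 <= n i0 by apply: H0.
have HP : P = \prod_(j | j != i0) n j.
  by apply: eq_bigl => j; rewrite -val_eqE /= lt0n.
pose x0 : grid_vertex n := @finfun _ (fun i => 'I_(n i)) (fun i => Ordinal (Hpos i)).
have Hmax : forall i, n i <= n i0 by move=> i; apply: Hsort.
have card : #|grid_vertex n| = n i0 * P by rewrite card_grid (bigD1 i0) // HP.
set k := treewidth (cart_adj n).
have lb := grid_lb d0 x0 Hmax (tw_spec (cart_adj n)).
have kpos : 0 < k := tw_pos x0 h2 (tw_spec (cart_adj n)).
have HPk : P <= 4 * d * k.
  have n0 : 0 < n i0 by apply: leq_trans h2.
  have : n i0 * P <= n i0 * (2 * k.+1 * d).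
    rewrite -card; apply: (leq_trans lb); rewrite -/k; nia.
  rewrite leq_pmul2l // => H; apply: (leq_trans H); nia.
split.
  have : (INR P <= INR (4 * d * k))%R by apply: le_INR; apply/leP.
  rewrite !mult_INR => H.
  apply: (Rle_trans _ (/ (4 * INR d) * (INR 4 * INR d * INR k))%R).
    by apply: Rmult_le_compat_l => //; left; apply: Rinv_0_lt_compat; lra.
  have -> : INR 4 = 4%R by simpl; lra.
  by right; field; lra.
split.
  apply: tw_min; apply: td_sub (tw_spec (strong_adj n)).
  exact: cart_sub_strong.
have ub := tw_min (grid_ub h2).
have : (INR (treewidth (strong_adj n)) <= INR (2 * P))%R.
  by apply: le_INR; apply/leP; rewrite HP.
rewrite mult_INR; have -> : INR 2 = 2%R by simpl; lra.
by [].
Qed.
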